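(* Let $H$ be a real Hilbert space, $T_n:H\to H$ for every $n\in\mathbb{N}$, and $(\gamma_n)$ a sequence of positive reals with $\sum_{n=0}^\infty\gamma_n^2=\infty$. Assume that $(T_n)$ is jointly firmly nonexpansive with respect to $(\gamma_n)$ and that $F:=\bigcap_{n\in\mathbb{N}}Fix(T_n)\neq\emptyset$. Let $x\in H$, $x_0:=x$, $x_{n+1}:=T_nx_n$ for all $n$. Then $(x_n)$ converges weakly to a point of $F$.
   Context: $(T_n)$ is jointly firmly nonexpansive w.r.t. $(\gamma_n)$ if for all $n,m\in\mathbb{N}$, $x,y\in H$, $\alpha,\beta\in[0,1]$ with $(1-\alpha)\gamma_n=(1-\beta)\gamma_m$: $\|T_nx-T_my\|\le\|((1-\alpha)x+\alpha T_nx)-((1-\beta)y+\beta T_my)\|$. $Fix(T)$ is the fixed point set of $T$. *)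

(* Defs.v *)
From HB Require Import structures.
From mathcomp Require Import all_boot all_order all_algebra.
From mathcomp Require Import all_classical all_reals all_analysis.
Set Implicit Arguments. Unset Strict Implicit. Unset Printing Implicit Defensive.
Import Order.TTheory GRing.Theory Num.Theory.
Import numFieldNormedType.Exports.
Local Open Scope classical_set_scope.
Local Open Scope ring_scope.

(* A real inner product on V compatible with the norm of V:
   bilinear (linear in the first argument + symmetric) and <x,x> = |x|^2.
   A complete normed space with such an inner product is a real Hilbert space. *)
Definition is_inner_product (R : realType) (V : normedModType R)
    (ip : V -> V -> R) : Prop :=
  [/\ (forall (a : R) (x y z : V), ip (a *: x + y) z = a * ip x z + ip y z),
      (forall x y : V, ip x y = ip y x) &
      (forall x : V, ip x x = `|x| ^+ 2)].

Definition Fix (T : Type) (f : T -> T) : set T := [set x | f x = x].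

Definition jointly_firmly_nonexpansive (R : realType) (V : normedModType R)
    (T : nat -> V -> V) (gamma : nat -> R) : Prop :=
  forall (n m : nat) (x y : V) (alpha beta : R),
    0 <= alpha <= 1 -> 0 <= beta <= 1 ->
    (1 - alpha) * gamma n = (1 - beta) * gamma m ->
    `|T n x - T m y| <=
      `|((1 - alpha) *: x + alpha *: T n x) - ((1 - beta) *: y + beta *: T m y)|.

Fixpoint iter_seq (V : Type) (T : nat -> V -> V) (x : V) (n : nat) : V :=
  match n with
  | 0 => x
  | k.+1 => T k (iter_seq T x k)
  end.

Definition weakly_converges (R : realType) (V : normedModType R)
    (ip : V -> V -> R) (u : nat -> V) (p : V) : Prop :=
  forall y : V, (fun n => ip (u n) y) @ \oo --> ip p y.

(* Main.v *)
Set Warnings "-all".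
Require Import Defs.
From HB Require Import structures.
From mathcomp Require Import all_boot all_order all_algebra.
From mathcomp Require Import all_classical all_reals all_analysis.
From mathcomp Require Import ring lra.
Import Order.TTheory GRing.Theory Num.Theory.
Import numFieldNormedType.Exports.
Local Open Scope classical_set_scope.
Local Open Scope ring_scope.

Lemma small_t (R : realType) (c d tau : R) : 0 < tau ->
  (forall t, 0 < t -> t <= tau -> 0 <= c + t * d) -> 0 <= c.
Proof.
move=> htau h; rewrite leNgt; apply/negP => hc.
set t := Num.min tau (- c / (`|d| + 1)).
have hd : 0 < `|d| + 1 by rewrite ltr_wpDl.
have ht0 : 0 < t by rewrite lt_min htau divr_gt0 // oppr_gt0.
have ht1 : t <= tau by rewrite ge_min lexx.
have ht2 : t <= - c / (`|d| + 1) by rewrite ge_min lexx orbT.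
have ht3 : t * (`|d| + 1) <= - c by rewrite -ler_pdivlMr.
have ht4 : t * d <= t * `|d| by rewrite ler_pM2l // ler_norm.
have := h t ht0 ht1; lra.
Qed.

Lemma conv_id (R : realType) (H : normedModType R) (a : R) (x u : H) :
  (1 - a) *: x + a *: u = u + (1 - a) *: (x - u).
Proof.
rewrite !scalerBl !scale1r scalerBr opprB.
by rewrite [RHS]addrA [u + _]addrC subrK [RHS]addrCA [RHS]addrC.
Qed.
Lemma conv_id2 (R : realType) (H : normedModType R) (s : R) (x u : H) :
  s *: x + (1 - s) *: u = u + s *: (x - u).
Proof.
have := @conv_id R H (1 - s) x u; have -> : 1 - (1 - s) = s by ring. done.
Qed.

Section IP.
Context {R : realType} {H : normedModType R} {ip : H -> H -> R}.
Hypothesis hip : is_inner_product ip.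

Lemma ipC x y : ip x y = ip y x.
Proof. by case: hip. Qed.
Lemma ipxx x : ip x x = `|x| ^+ 2.
Proof. by case: hip. Qed.
Lemma ip_lin a x y z : ip (a *: x + y) z = a * ip x z + ip y z.
Proof. by case: hip => h _ _; apply: h. Qed.
Lemma ip0l z : ip 0 z = 0.
Proof.
have := ip_lin 1 0 0 z; rewrite scaler0 addr0 mul1r => h.
lra.
Qed.
Lemma ipDl x y z : ip (x + y) z = ip x z + ip y z.
Proof. by rewrite -[x]scale1r ip_lin mul1r scale1r. Qed.
Lemma ipZl a x z : ip (a *: x) z = a * ip x z.
Proof. by rewrite -[a *: x]addr0 ip_lin ip0l addr0. Qed.
Lemma ipNl x z : ip (- x) z = - ip x z.
Proof. by rewrite -scaleN1r ipZl mulN1r. Qed.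
Lemma ipBl x y z : ip (x - y) z = ip x z - ip y z.
Proof. by rewrite ipDl ipNl. Qed.
Lemma ip0r z : ip z 0 = 0.
Proof. by rewrite ipC ip0l. Qed.
Lemma ipDr x y z : ip z (x + y) = ip z x + ip z y.
Proof. by rewrite ipC ipDl !(ipC z). Qed.
Lemma ipZr a x z : ip z (a *: x) = a * ip z x.
Proof. by rewrite ipC ipZl ipC. Qed.
Lemma ipNr x z : ip z (- x) = - ip z x.
Proof. by rewrite ipC ipNl ipC. Qed.
Lemma ipBr x y z : ip z (x - y) = ip z x - ip z y.
Proof. by rewrite ipDr ipNr. Qed.

Lemma CS x y : ip x y <= `|x| * `|y|.
Proof.
have h1 : 0 <= `|x| by [].
have h2 : 0 <= `|y| by [].
have [y0|yn0] := eqVneq y 0.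
  by rewrite y0 ip0r normr0 mulr0.
set t := ip x y / `|y| ^+ 2.
have ny : 0 < `|y| by rewrite normr_gt0.
have := ipxx (x - t *: y).
rewrite !(ipBl, ipBr, ipZl, ipZr) (ipC y x) !ipxx => h.
have h0 : 0 <= `|x - t *: y| ^+ 2 by rewrite exprn_ge0.
rewrite -h in h0.
have : ip x y ^+ 2 <= (`|x| * `|y|) ^+ 2.
  have e : `|x| ^+ 2 - t * ip x y - (t * ip x y - t * (t * `|y| ^+ 2)) =
     (`|x| ^+ 2 * `|y| ^+ 2 - ip x y ^+ 2) / `|y| ^+ 2.
    rewrite /t; field; rewrite gt_eqF //.
  rewrite e in h0; rewrite -subr_ge0.
  have -> : (`|x| * `|y|) ^+ 2 - ip x y ^+ 2 =
     (`|x| ^+ 2 * `|y| ^+ 2 - ip x y ^+ 2) / `|y| ^+ 2 * `|y| ^+ 2.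
    field; rewrite gt_eqF //.
  by rewrite mulr_ge0 // exprn_ge0.
move=> h3; have h4 : 0 <= `|x| * `|y| by rewrite mulr_ge0.
rewrite leNgt; apply/negP => h5; nra.
Qed.

Lemma normD2 x y : `|x + y| ^+ 2 = `|x| ^+ 2 + 2 * ip x y + `|y| ^+ 2.
Proof. rewrite -!ipxx !(ipDl, ipDr) (ipC y x); ring. Qed.

End IP.

Section Mono.
Variables (R : realType) (H : normedModType R) (ip : H -> H -> R).
Hypothesis hip : is_inner_product ip.
Variables (T : nat -> H -> H) (gamma : nat -> R).
Hypothesis gpos : forall n, 0 < gamma n.
Hypothesis hj : jointly_firmly_nonexpansive T gamma.

Definition gg n x := (gamma n)^-1 *: (x - T n x).

Lemma mono n m x y : 0 <= ip (T n x - T m y) (gg n x - gg m y).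
Proof.
set w := T n x - T m y; set e := gg n x - gg m y.
have key : forall t, 0 < t -> t <= Num.min (gamma n) (gamma m) ->
   0 <= 2 * ip w e + t * `|e| ^+ 2.
  move=> t t0; rewrite le_min => /andP[tn tm].
  have gn := gpos n; have gm := gpos m.
  have := @hj n m x y (1 - t / gamma n) (1 - t / gamma m).
  have hs : forall g, 0 < g -> t <= g -> 0 <= 1 - t / g <= 1.
    move=> g g0 tg; rewrite subr_ge0 ler_pdivrMr // mul1r tg /=.
    by rewrite lerBlDr lerDl divr_ge0 // ltW.
  have e1 : forall g, 0 < g -> 1 - (1 - t / g) = t / g by move=> g g0; ring.
  rewrite !e1 // !mulfVK ?gt_eqF // => /(_ (hs _ gn tn) (hs _ gm tm) erefl).
  rewrite !conv_id2.
  have -> : T n x + t / gamma n *: (x - T n x) - (T m y + t / gamma m *: (y - T m y))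
     = w + t *: e.
    rewrite /w /e /gg [t *: (_ - _)]scalerBr !scalerA opprD addrACA.
    done.
  move=> hle.
  have : `|w| ^+ 2 <= `|w + t *: e| ^+ 2.
    by rewrite lerXn2r // ?nnegrE.
  rewrite [X in _ <= X](normD2 hip) (ipZr hip) normrZ exprMn (ger0_norm (ltW t0)) => h.
  have : 0 <= t * (2 * ip w e + t * `|e| ^+ 2) by lra.
  by rewrite pmulr_rge0.
have hmin : 0 < Num.min (gamma n) (gamma m) by rewrite lt_min !gpos.
have := @small_t R _ _ _ hmin key.
lra.
Qed.

End Mono.
Arguments gg {R H} T gamma n x.

Lemma ev_ex (P : nat -> Prop) : (\forall n \near \oo, P n) ->
  exists N, forall n, (N <= n)%N -> P n.
Proof. by case=> N _ h; exists N => n hn; apply: h. Qed.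

Lemma ex_ev (P : nat -> Prop) : (exists N, forall n, (N <= n)%N -> P n) ->
  \forall n \near \oo, P n.
Proof. by case=> N h; exists N. Qed.

Lemma inv_small (R : realType) (e : R) : 0 < e ->
  exists N, forall n, (N <= n)%N -> n.+1%:R^-1 < e.
Proof. by move=> e0; apply: ev_ex; apply: (@near_infty_natSinv_lt R (PosNum e0)). Qed.

Lemma le_eps (R : realType) (a c k : R) : 0 <= k ->
  (forall e, 0 < e -> a <= c + e * k) -> a <= c.
Proof.
move=> k0 h; apply/ler_addgt0Pr => e e0.
have k1 : 0 < k + 1 by rewrite ltr_wpDl.
have := h (e / (k + 1)) (divr_gt0 e0 k1).
have : e / (k + 1) * k <= e.
  rewrite mulrAC ler_pdivrMr // ler_pM2l //; lra.
lra.
Qed.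

Section Key.
Context {R : realType} {H : completeNormedModType R} {ip : H -> H -> R}.
Hypothesis hip : is_inner_product ip.

Lemma key_cluster (u : nat -> H) (B : R) (S : nat -> Prop) :
  (forall n, `|u n| <= B) -> (forall N, exists n, (N <= n)%N /\ S n) ->
  exists z, forall v c N,
    (forall n, (N <= n)%N -> S n -> ip (u n) v <= c) -> ip z v <= c.
Proof.
move=> hB hS.
pose C N w := forall v c, (forall n, (N <= n)%N -> S n -> ip (u n) v <= c) -> ip w v <= c.
have Cu : forall N n, (N <= n)%N -> S n -> C N (u n).
  by move=> N n hn sn v c h; apply: h.
have Cmono : forall N M w, (N <= M)%N -> C M w -> C N w.
  move=> N M w hNM hw v c h; apply: hw => n hn sn; apply: h => //.
  exact: leq_trans hNM hn.
have Cmid : forall N a b, C N a -> C N b -> C N (2^-1 *: (a + b)).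
  move=> N a b ha hb v c h.
  rewrite (ipZl hip) (ipDl hip).
  have := ha v c h; have := hb v c h; lra.
pose E N := [set r | exists w, C N w /\ r = `|w| ^+ 2].
pose D N := inf (E N).
have E0 : forall N, E N !=set0.
  move=> N; have [n [hn sn]] := hS N.
  by exists (`|u n| ^+ 2); exists (u n); split => //; apply: Cu.
have Elb : forall N, has_lbound (E N).
  by move=> N; exists 0 => r [w [_ ->]]; rewrite exprn_ge0.
have Dle : forall N w, C N w -> D N <= `|w| ^+ 2.
  by move=> N w hw; apply: ge_inf => //; exists w.
have DB : forall N, D N <= B ^+ 2.
  move=> N; have [n [hn sn]] := hS N.
  apply: le_trans (Dle _ _ (Cu _ _ hn sn)) _.
  by rewrite lerXn2r ?nnegrE // (le_trans _ (hB 0%N)).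
have Dmono : forall N M, (N <= M)%N -> D N <= D M.
  move=> N M hNM; apply: lb_le_inf => // r [w [hw ->]].
  by apply: Dle; apply: Cmono hw.
pose d := sup (range D).
have hsup : has_sup (range D).
  split; first by exists (D 0%N); exists 0%N.
  by exists (B ^+ 2) => r [N _ <-].
have Dd : forall N, D N <= d.
  by move=> N; apply: ub_le_sup; [exact: hsup.2 | exists N].
have dD : forall e, 0 < e -> exists N0, forall N, (N0 <= N)%N -> d - e < D N.
  move=> e e0; have [r [N0 _ <-] hr] := sup_adherent e0 hsup.
  exists N0 => N hN; apply: lt_le_trans hr _; exact: Dmono.
have hw : forall N, exists w, C N w /\ `|w| ^+ 2 < D N + N.+1%:R^-1.
  move=> N; have [r [w [hw ->]] hr] := @inf_adherent R (E N) (N.+1%:R^-1)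
    ltac:(by rewrite invr_gt0) (conj (E0 N) (Elb N)).
  by exists w.
have [w hwP] := choice hw.
have cau : forall e, 0 < e -> exists N, forall M, (N <= M)%N -> `|w N - w M| < e.
  move=> e e0.
  have e2 : 0 < e ^+ 2 / 8 by rewrite divr_gt0 // exprn_gt0.
  have [N1 hN1] := dD _ e2.
  have [N2 hN2] := @inv_small R _ e2.
  exists (maxn N1 N2) => M hM.
  set N := maxn N1 N2.
  have hNM : (N <= M)%N by [].
  have [cM nM] := hwP M; have [cN nN] := hwP N.
  have cmid := Cmid N _ _ (Cmono _ _ _ hNM cM) cN.
  have hmid := Dle _ _ cmid.
  rewrite normrZ exprMn (normD2 hip) in hmid.
  have hpar : `|w N - w M| ^+ 2 = `|w N| ^+ 2 - 2 * ip (w M) (w N) + `|w M| ^+ 2.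
    by rewrite (normD2 hip) (ipNr hip) normrN (ipC hip); ring.
  have h1 := hN1 N (leq_maxl _ _).
  have h2 := hN2 N (leq_maxr _ _).
  have h3 := hN2 M (leq_trans (leq_maxr _ _) hNM).
  have h4 := Dd M.
  have h5 : `|(2 : R)^-1| ^+ 2 = (4 : R)^-1.
    by rewrite ger0_norm; [field | rewrite invr_ge0].
  rewrite h5 in hmid.
  have hm : 4 * D N <= `|w M| ^+ 2 + 2 * ip (w M) (w N) + `|w N| ^+ 2.
    have := ler_wpM2l (_ : 0 <= 4) hmid; rewrite mulrA mulfV ?mul1r //.
    by apply; rewrite ler0n.
  have : `|w N - w M| ^+ 2 < e ^+ 2.
    rewrite hpar; have eq8 : e ^+ 2 = 8 * (e ^+ 2 / 8) by field.
    rewrite eq8; move: e2 h1 h2 h3; set q := e ^+ 2 / 8.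
    move=> e2 h1 h2 h3.
    clearbody q N.
    move: hm nN nM h1 h2 h3 h4 e2.
    generalize (`|w N| ^+ 2) (`|w M| ^+ 2) (ip (w M) (w N)) (D N) (D M).
    move=> a b c dn dm hm nN nM h1 h2 h3 h4 e2.
    match type of nN with is_true (_ < _ + ?X) => have h2' : X < q := h2; move: X nN h2' => i nN h2' end.
    match type of nM with is_true (_ < _ + ?X) => have h3' : X < q := h3; move: X nM h3' => j nM h3' end.
    lra.
  move=> hh; have a0 := normr_ge0 (w N - w M).
  rewrite ltNge; apply/negP => hle.
  have := ler_pM (ltW e0) (ltW e0) hle hle; rewrite -!expr2; lra.
have cw : cvg (w @ \oo).
  apply: cauchy_cvg; apply: cauchy_exP => e e0.
  have [N hN] := cau e e0.
  exists (w N); apply: ex_ev; exists N => M hM /=.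
  by rewrite -ball_normE /ball_ /=; apply: hN.
set z := lim (w @ \oo).
exists z => v c N hyp.
have hwc : forall M, (N <= M)%N -> ip (w M) v <= c.
  move=> M hM; have [cM _] := hwP M.
  exact: (Cmono _ _ _ hM cM) v c hyp.
apply: (@le_eps R _ _ `|v|) => // e e0.
have /cvgrPdist_lt /(_ e e0) /ev_ex [M0 hM0] := cw.
have hM := hM0 (maxn N M0) (leq_maxr _ _).
have hc := hwc (maxn N M0) (leq_maxl _ _).
set wM := w (maxn N M0) in hM hc.
have -> : z = wM + (z - wM) by rewrite addrC subrK.
rewrite (ipDl hip).
have := CS hip (z - wM) v.
have : `|z - wM| * `|v| <= e * `|v| by rewrite ler_wpM2r // ltW.
lra.
Qed.

End Key.

Section Main.
Context {R : realType} {H : completeNormedModType R} {ip : H -> H -> R}.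
Hypothesis hip : is_inner_product ip.
Variables (T : nat -> H -> H) (gamma : nat -> R).
Hypothesis gpos : forall n, 0 < gamma n.
Hypothesis hj : jointly_firmly_nonexpansive T gamma.
Variable x0 : H.
Let xs n := iter_seq T x0 n.

Lemma xsS n : xs n.+1 = T n (xs n).
Proof. by []. Qed.

Lemma fejer q (hq : forall n, T n q = q) n :
  `|xs n.+1 - q| ^+ 2 + `|xs n - xs n.+1| ^+ 2 <= `|xs n - q| ^+ 2.
Proof.
have := @mono _ _ _ hip _ _ gpos hj n n (xs n) q.
rewrite /gg hq subrr scaler0 subr0 (ipZr hip) -xsS.
rewrite pmulr_rge0 ?invr_gt0 // => h.
have -> : xs n - q = (xs n.+1 - q) + (xs n - xs n.+1) by rewrite [RHS]addrC [RHS]addrA subrK.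
rewrite [X in _ <= X](normD2 hip); lra.
Qed.

Lemma fejer_le q (hq : forall n, T n q = q) n : `|xs n - q| <= `|xs 0 - q|.
Proof.
elim: n => // n ih; apply: le_trans ih.
have := fejer _ hq n.
have a := normr_ge0 (xs n.+1 - q); have b := normr_ge0 (xs n - q).
move=> h; rewrite leNgt; apply/negP => hl.
have := ltr_pM b b hl hl; rewrite -!expr2.
have := sqr_ge0 `|xs n - xs n.+1|; lra.
Qed.

Let r n := `|gg T gamma n (xs n)|.

Lemma r_step n : r n.+1 <= r n.
Proof.
have := @mono _ _ _ hip _ _ gpos hj n.+1 n (xs n.+1) (xs n).
set G' := gg T gamma n.+1 (xs n.+1); set G := gg T gamma n (xs n).
have -> : T n.+1 (xs n.+1) - T n (xs n) = - (gamma n.+1 *: G').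
  rewrite /G' /gg scalerA mulfV ?gt_eqF // scale1r opprB.
  by rewrite -xsS -xsS.
rewrite (ipNl hip) (ipZl hip) (ipBr hip) (ipxx hip) oppr_ge0.
rewrite pmulr_rle0 // subr_le0 => h.
have := CS hip G' G; rewrite -/(r n) -/(r n.+1) /r -/G -/G'.
have a := normr_ge0 G'; have b := normr_ge0 G.
move=> h2; rewrite leNgt; apply/negP => hl.
have := ltr_pM b b hl hl; rewrite -!expr2 => h3.
have : `|G'| * `|G| < `|G'| * `|G'| by rewrite ltr_pM2l // (le_lt_trans b hl).
rewrite -expr2; lra.
Qed.

Lemma r_le k N : (k <= N)%N -> r N <= r k.
Proof.
elim: N => [|N ih]; first by rewrite leqn0 => /eqP ->.
rewrite leq_eqVlt => /orP[/eqP -> //|hk].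
by apply: le_trans (r_step N) (ih hk).
Qed.

Lemma step_norm n : `|xs n - xs n.+1| = gamma n * r n.
Proof.
rewrite /r /gg normrZ ger0_norm ?invr_ge0 ?(ltW (gpos n)) // -xsS mulrA.
by rewrite mulfV ?gt_eqF // mul1r.
Qed.

Variable p : H.
Hypothesis hp : forall n, T n p = p.

Lemma sum_bound N :
  `|xs N - p| ^+ 2 + \sum_(0 <= k < N) (gamma k * r k) ^+ 2 <= `|xs 0 - p| ^+ 2.
Proof.
elim: N => [|N ih]; first by rewrite big_geq // addr0.
rewrite big_nat_recr //= -step_norm.
have := fejer _ hp N; lra.
Qed.

Lemma r_bound N : r N ^+ 2 * series (fun k => gamma k ^+ 2) N <= `|xs 0 - p| ^+ 2.
Proof.
apply: le_trans (sum_bound N); rewrite /series /= mulr_sumr.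
have : 0 <= `|xs N - p| ^+ 2 by rewrite sqr_ge0.
suff : \sum_(0 <= i < N) r N ^+ 2 * gamma i ^+ 2 <= \sum_(0 <= k < N) (gamma k * r k) ^+ 2 by lra.
rewrite big_nat [X in _ <= X]big_nat; apply: ler_sum => k /andP[_ hk].
rewrite exprMn mulrC ler_wpM2l ?sqr_ge0 //.
have := r_le _ _ (ltnW hk); have := normr_ge0 (gg T gamma N (xs N)) => a h.
by rewrite ler_pXn2r ?nnegrE // (le_trans a h).
Qed.


Hypothesis hsum : [series gamma k ^+ 2]_k @ \oo --> +oo.

Lemma r_small e : 0 < e -> exists N, forall n, (N <= n)%N -> r n <= e.
Proof.
move=> e0; set C := `|xs 0 - p| ^+ 2.
have e2 : 0 < e ^+ 2 by rewrite exprn_gt0.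
have C0 : 0 <= C by rewrite /C sqr_ge0.
have /cvgryPge /(_ ((C + 1) / e ^+ 2)) /ev_ex [N hN] := hsum.
exists N => n hn; have hS := hN n hn; have hb := r_bound n.
move: hS hb; set S := series _ n => hS hb.
have S0 : 0 < S by apply: lt_le_trans hS; rewrite divr_gt0 // ltr_wpDl.
rewrite ler_pdivrMr // in hS.
have r0 : 0 <= r n by rewrite /r normr_ge0.
rewrite leNgt; apply/negP => hl.
have := ltr_pM (ltW e0) (ltW e0) hl hl; rewrite -!expr2 => h.
have : e ^+ 2 * S < r n ^+ 2 * S by rewrite ltr_pM2r.
rewrite -/C in hb; lra.
Qed.

Let B := `|p| + `|xs 0 - p|.

Lemma xs_bound n : `|xs n| <= B.
Proof.
have -> : xs n = (xs n - p) + p by rewrite subrK.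
apply: le_trans (ler_normD _ _) _; rewrite /B addrC lerD2l.
exact: fejer_le.
Qed.

Definition clus (S : nat -> Prop) (z : H) := forall v c N,
  (forall n, (N <= n)%N -> S n -> ip (xs n) v <= c) -> ip z v <= c.

Lemma cl_fix S z : clus S z -> forall m, T m z = z.
Proof.
move=> hz m; set w := T m z; set h := gg T gamma m z.
have k0 : 0 <= B + `|w| by rewrite addr_ge0 // (le_trans _ (xs_bound 0)).
have key : ip z h <= ip w h.
  apply: (@le_eps R _ _ (B + `|w|) k0) => e e0.
  have [N hN] := r_small _ e0.
  apply: (hz h _ N.+1) => -[|n] // hn _.
  have := @mono _ _ _ hip _ _ gpos hj n m (xs n) z; rewrite -xsS -/w -/h.
  rewrite (ipBr hip) subr_ge0 => h1.
  have h2 := CS hip (xs n.+1 - w) (gg T gamma n (xs n)).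
  have h3 : `|xs n.+1 - w| <= B + `|w|.
    by apply: le_trans (ler_normB _ _) _; rewrite lerD2r xs_bound.
  have h4 : r n <= e by apply: hN.
  have h5 : `|xs n.+1 - w| * `|gg T gamma n (xs n)| <= (B + `|w|) * e.
    by apply: ler_pM => //; apply: normr_ge0.
  move: h1; rewrite (ipBl hip) => h1; lra.
have : ip (z - w) h <= 0 by rewrite (ipBl hip); lra.
rewrite /h /gg -/w (ipZr hip) (ipxx hip) pmulr_rle0 ?invr_gt0 // => h0.
have : `|z - w| = 0.
  apply/eqP; rewrite -sqrf_eq0 eq_le h0 sqr_ge0 //.
by move/normr0_eq0/subr0_eq.
Qed.

Lemma noninc_le (s : nat -> R) : (forall n, s n.+1 <= s n) ->
  forall k N, (k <= N)%N -> s N <= s k.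
Proof.
move=> hs k; elim=> [|N ih]; first by rewrite leqn0 => /eqP ->.
rewrite leq_eqVlt => /orP[/eqP -> //|hk].
by apply: le_trans (hs N) (ih hk).
Qed.

Lemma noninc_eps (s : nat -> R) : (forall n, s n.+1 <= s n) -> (forall n, 0 <= s n) ->
  forall e, 0 < e -> exists N, forall n, (N <= n)%N -> s N - e <= s n /\ s n <= s N.
Proof.
move=> hs s0 e e0.
have hinf : has_inf (range s).
  split; first by exists (s 0%N); exists 0%N.
  by exists 0 => y [n _ <-].
have [y [N _ <-] hN] := inf_adherent e0 hinf.
exists N => n hn; split; last exact: noninc_le.
have : inf (range s) <= s n by apply: ge_inf; [exact: hinf.2 | exists n].
lra.
Qed.

Lemma ip_diff a z z' :
  2 * ip a (z - z') = `|a - z'| ^+ 2 - `|a - z| ^+ 2 + `|z| ^+ 2 - `|z'| ^+ 2.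
Proof.
rewrite !(normD2 hip) !normrN !(ipNr hip) (ipBr hip); ring.
Qed.

Lemma cl_uniq S S' z z' : clus S z -> clus S' z' ->
  (forall n, T n z = z) -> (forall n, T n z' = z') -> z = z'.
Proof.
move=> hz hz' fz fz'.
pose s1 n := `|xs n - z| ^+ 2; pose s2 n := `|xs n - z'| ^+ 2.
have m1 : forall n, s1 n.+1 <= s1 n.
  by move=> n; have := fejer _ fz n; have := sqr_ge0 `|xs n - xs n.+1|; rewrite /s1; lra.
have m2 : forall n, s2 n.+1 <= s2 n.
  by move=> n; have := fejer _ fz' n; have := sqr_ge0 `|xs n - xs n.+1|; rewrite /s2; lra.
have p1 : forall n, 0 <= s1 n by move=> n; rewrite /s1 sqr_ge0.
have p2 : forall n, 0 <= s2 n by move=> n; rewrite /s2 sqr_ge0.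
set v := z - z'.
set K := `|z| ^+ 2 - `|z'| ^+ 2.
have hle : ip v v <= 0.
  apply: (@le_eps R _ _ 1) => // e e0.
  have [N1 h1] := @noninc_eps s1 m1 p1 e e0.
  have [N2 h2] := @noninc_eps s2 m2 p2 e e0.
  set c := (s2 N2 - s1 N1 + K + e) / 2.
  set c' := (- (s2 N2 - s1 N1 + K) + e) / 2.
  have A : ip z v <= c.
    apply: (hz v c (maxn N1 N2)) => n hn _.
    have [a1 a2] := h1 n (leq_trans (leq_maxl _ _) hn).
    have [b1 b2] := h2 n (leq_trans (leq_maxr _ _) hn).
    have := ip_diff (xs n) z z'; rewrite -/v -/(s1 n) -/(s2 n) /c /K; lra.
  have B' : ip z' (- v) <= c'.
    apply: (hz' (- v) c' (maxn N1 N2)) => n hn _.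
    have [a1 a2] := h1 n (leq_trans (leq_maxl _ _) hn).
    have [b1 b2] := h2 n (leq_trans (leq_maxr _ _) hn).
    have := ip_diff (xs n) z z'; rewrite (ipNr hip) -/v -/(s1 n) -/(s2 n) /c' /K; lra.
  move: A B'; rewrite /v (ipNr hip) !(ipBl hip) /c /c'; lra.
have : `|v| = 0.
  apply/eqP; rewrite -sqrf_eq0 eq_le -(ipxx hip) hle /= (ipxx hip) sqr_ge0 //.
by move/normr0_eq0/subr0_eq.
Qed.


Lemma main_result : exists2 q, (forall n, T n q = q) &
  forall y, (fun n => ip (xs n) y) @ \oo --> ip q y.
Proof.
have hB : forall n, `|xs n| <= B := xs_bound.
have [p0 hp0] := @key_cluster _ _ _ hip xs B (fun _ => True) hB
  (fun N => ex_intro _ N (conj (leqnn N) I)).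
have fp0 := cl_fix _ _ hp0.
have L9 : forall S v c, (forall N, exists n, (N <= n)%N /\ S n) ->
    (forall n, S n -> ip (xs n) v <= c) -> ip p0 v <= c.
  move=> S v c hS hc; have [z hz] := @key_cluster _ _ _ hip xs B S hB hS.
  have fz := cl_fix _ _ hz.
  have <- : z = p0 := cl_uniq _ _ _ _ hz hp0 fz fp0.
  by apply: (hz v c 0%N) => n _; exact: hc.
exists p0 => // y.
apply/cvgrPdist_lt => e e0.
have [hin|hnot] := pselect (exists N, forall n, (N <= n)%N -> `|ip p0 y - ip (xs n) y| < e).
  exact: ex_ev.
exfalso.
have hinf : forall N, exists n, (N <= n)%N /\ e <= `|ip p0 y - ip (xs n) y|.
  move=> N; have [//|hn] := pselect (exists n, (N <= n)%N /\ e <= `|ip p0 y - ip (xs n) y|).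
  exfalso; apply: hnot; exists N => n hn'; rewrite ltNge; apply/negP => he; apply: hn.
  by exists n.
have [h1|h1] := pselect (exists N1, forall n, (N1 <= n)%N -> ip (xs n) y < ip p0 y + e).
- case: h1 => N1 hN1.
  have hS2 : forall N, exists n, (N <= n)%N /\ ip (xs n) y <= ip p0 y - e.
    move=> N; have [n [hn he]] := hinf (maxn N N1).
    exists n; split; first exact: leq_trans (leq_maxl _ _) hn.
    have := hN1 n (leq_trans (leq_maxr _ _) hn).
    by move: he; rewrite ler_normr => /orP[]; lra.
  have := L9 _ y (ip p0 y - e) hS2 (fun n h => h); lra.
- have hS1 : forall N, exists n, (N <= n)%N /\ ip p0 y + e <= ip (xs n) y.
    move=> N; have [//|hn] := pselect (exists n, (N <= n)%N /\ ip p0 y + e <= ip (xs n) y).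
    exfalso; apply: h1; exists N => n hn'; rewrite ltNge; apply/negP => he; apply: hn.
    by exists n.
  have hh : forall n, ip p0 y + e <= ip (xs n) y -> ip (xs n) (- y) <= - (ip p0 y + e).
    by move=> n h; rewrite (ipNr hip); lra.
  have := L9 _ (- y) (- (ip p0 y + e)) hS1 hh; rewrite (ipNr hip); lra.
Qed.

End Main.

Theorem theorem3p15 (R : realType) (H : completeNormedModType R)
    (ip : H -> H -> R) (hip : is_inner_product ip)
    (T : nat -> H -> H) (gamma : nat -> R)
    (hgamma_pos : forall n, 0 < gamma n)
    (hgamma_sum : [series gamma k ^+ 2]_k @ \oo --> +oo)
    (hjfne : jointly_firmly_nonexpansive T gamma)
    (hF : (\bigcap_n Fix (T n)) !=set0)
    (x : H) :
  exists2 p : H, p \in \bigcap_n Fix (T n) &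
    weakly_converges ip (iter_seq T x) p.
Proof.
case: hF => p hp.
have hp' : forall n, T n p = p by move=> n; exact: hp n I.
have [q hq hw] := @main_result _ _ _ hip T gamma hgamma_pos hjfne x p hp' hgamma_sum.
exists q; first by apply/mem_set => n _; exact: hq n.
exact: hw.
Qed.
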